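(* Let $a^*\in\mathbb{R}$, $\epsilon\ge0$ with $|a^*|-\epsilon>1$, $m\in\mathbb{N}$, $R\ge0$, $N:=2^R$. Let $\delta_+:=(|a^*|+\epsilon)^m-|a^*|^m$, $\delta_-:=|a^*|^m-(|a^*|-\epsilon)^m$, $M:=N^m$, and $$\kappa:=\frac1M\Big(|a^*|^m+\max\{\tfrac M2,1\}\delta_++\max\{\tfrac M2-1,0\}\delta_-\Big).$$ Then $\kappa^2<1$ (i.e. $\bar\kappa<1$ in the lossless case $p=0$) if and only if $$\frac{\delta_++\delta_-}{2}<1\quad\text{and}\quad R>\max\Big\{\log_2(|a^*|+\epsilon),\ \frac1m\log_2\frac{|a^*|^m-\delta_-}{1-(\delta_++\delta_-)/2}\Big\}.$$
   Context: In particular, if $m$ is so large that $(\delta_++\delta_-)/2\ge1$, no data rate $R$ achieves $\kappa<1$. *)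

(* Defs.v *)
From Stdlib Require Import Reals.
Open Scope R_scope.

Definition log2 (x : R) : R := ln x / ln 2.

Definition delta_plus (a eps : R) (m : nat) : R := (Rabs a + eps) ^ m - Rabs a ^ m.
Definition delta_minus (a eps : R) (m : nat) : R := Rabs a ^ m - (Rabs a - eps) ^ m.

Definition Nrate (Rr : R) : R := Rpower 2 Rr.
Definition Mval (Rr : R) (m : nat) : R := (Nrate Rr) ^ m.

Definition kappa (a eps : R) (m : nat) (Rr : R) : R :=
  let M := Mval Rr m in
  / M * (Rabs a ^ m + Rmax (M / 2) 1 * delta_plus a eps m
                    + Rmax (M / 2 - 1) 0 * delta_minus a eps m).

(* Main.v *)
Require Import Defs.
From Stdlib Require Import Reals Lra Lia.
Open Scope R_scope.

Lemma Mval_pos Rr m : 0 < Mval Rr m.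
Proof. unfold Mval, Nrate, Rpower. apply pow_lt, exp_pos. Qed.

Lemma ln_Mval Rr m : ln (Mval Rr m) = INR m * (Rr * ln 2).
Proof. unfold Mval, Nrate, Rpower. rewrite ln_pow by apply exp_pos. now rewrite ln_exp. Qed.

Lemma key (m : nat) (Rr q : R) : (1 <= m)%nat -> 0 < q ->
  (Rr > / INR m * log2 q <-> Mval Rr m > q).
Proof.
  intros Hm Hq.
  assert (Hn : 0 < INR m) by (apply lt_0_INR; lia).
  assert (HL : 0 < ln 2) by (apply ln_lt_0_2 || (rewrite <- ln_1; apply ln_increasing; lra)).
  unfold log2.
  assert (E : Mval Rr m > q <-> ln (Mval Rr m) > ln q).
  { split; intro H.
    - apply ln_increasing; auto.
    - apply ln_lt_inv; auto using Mval_pos. }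
  rewrite E, ln_Mval.
  split; intro H.
  - apply Rmult_gt_compat_l with (r := INR m * ln 2) in H; [|nra].
    replace (INR m * ln 2 * (/ INR m * (ln q / ln 2))) with (ln q) in H by (field; lra).
    nra.
  - apply Rmult_lt_reg_l with (r := INR m * ln 2); [nra|].
    replace (INR m * ln 2 * (/ INR m * (ln q / ln 2))) with (ln q) by (field; lra).
    nra.
Qed.

Lemma key1 (m : nat) (Rr y : R) : (1 <= m)%nat -> 0 < y ->
  (Rr > log2 y <-> Mval Rr m > y ^ m).
Proof.
  intros Hm Hy.
  assert (Hn : 0 < INR m) by (apply lt_0_INR; lia).
  rewrite <- key by (auto; apply pow_lt; auto).
  unfold log2. rewrite ln_pow by auto.
  assert (0 < ln 2) by (rewrite <- ln_1; apply ln_increasing; lra).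
  replace (/ INR m * (INR m * ln y / ln 2)) with (ln y / ln 2) by (field; lra).
  tauto.
Qed.

Lemma divlt q d M : 0 < d -> q < M * d -> M > q / d.
Proof. intros Hd H. apply Rmult_lt_reg_r with d; auto. unfold Rdiv. rewrite Rmult_assoc, Rinv_l; lra. Qed.
Lemma divlt2 q d M : 0 < d -> M > q / d -> q < M * d.
Proof. intros Hd H. apply Rmult_lt_compat_r with (r := d) in H; auto. unfold Rdiv in H. rewrite Rmult_assoc, Rinv_l in H; lra. Qed.

Theorem mainTheorem10 (a eps : R) (m : nat) (Rr : R) :
  0 <= eps -> Rabs a - eps > 1 -> (1 <= m)%nat -> 0 <= Rr ->
  (kappa a eps m Rr ^ 2 < 1 <->
   ((delta_plus a eps m + delta_minus a eps m) / 2 < 1 /\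
    Rr > Rmax (log2 (Rabs a + eps))
              (/ INR m * log2 ((Rabs a ^ m - delta_minus a eps m)
                               / (1 - (delta_plus a eps m + delta_minus a eps m) / 2))))).
Proof.
  intros He Ha Hm HR.
  assert (HM1 : 1 <= Mval Rr m).
  { unfold Mval, Nrate, Rpower. apply pow_R1_Rle.
    rewrite <- exp_0. destruct (Req_dec (Rr * ln 2) 0) as [E|E]; [rewrite E; lra|].
    left. apply exp_increasing.
    assert (0 < ln 2) by (rewrite <- ln_1; apply ln_increasing; lra). nra. }
  assert (HQ : 1 < (Rabs a - eps) ^ m) by (apply Rlt_pow_R1; [lra|lia]).
  assert (HxQ : (Rabs a - eps) ^ m <= Rabs a ^ m) by (apply pow_incr; lra).
  assert (HPx : Rabs a ^ m <= (Rabs a + eps) ^ m) by (apply pow_incr; lra).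
  assert (Hmax : forall u v, Rr > Rmax u v <-> Rr > u /\ Rr > v).
  { intros u v; unfold Rmax; destruct (Rle_dec u v); split; intros; try split; lra. }
  rewrite Hmax.
  rewrite (key1 m Rr (Rabs a + eps)) by (auto; lra).
  unfold kappa, delta_plus, delta_minus.
  replace (Rabs a ^ m - (Rabs a ^ m - (Rabs a - eps) ^ m)) with ((Rabs a - eps) ^ m) by ring.
  generalize (Mval_pos Rr m).
  set (M := Mval Rr m) in *. set (x := Rabs a ^ m) in *. set (P := (Rabs a + eps) ^ m) in *.
  set (Q := (Rabs a - eps) ^ m) in *.
  intro HM0.
  replace (P - x + (x - Q)) with (P - Q) by ring.
  assert (Hk : forall k, 0 <= k -> (k ^ 2 < 1 <-> k < 1)).
  { intros k Hk; split; intro; nra. }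
  destruct (Rlt_dec M 2) as [H2|H2].
  - rewrite Rmax_right by lra. rewrite Rmax_right by lra.
    replace (/ M * (x + 1 * (P - x) + 0 * (x - Q))) with (P / M) by (field; lra).
    rewrite Hk by (apply Rle_mult_inv_pos; lra).
    assert (EP : P / M < 1 <-> P < M).
    { split; intro H.
      - apply Rmult_lt_compat_r with (r := M) in H; auto.
        unfold Rdiv in H. rewrite Rmult_assoc, Rinv_l in H; lra.
      - apply Rmult_lt_reg_r with (r := M); auto. unfold Rdiv.
        rewrite Rmult_assoc, Rinv_l; lra. }
    rewrite EP.
    split.
    + intro H. assert (Hs : (P - Q) / 2 < 1) by lra.
      split; [exact Hs|]. split; [lra|].
      rewrite key by (auto; apply Rdiv_lt_0_compat; lra). fold M.
      apply divlt; [lra|].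
      assert (0 <= (2 - M) * ((P-Q)/2)) by (apply Rmult_le_pos; lra). nra.
    + intros [_ [H _]]. lra.
  - rewrite Rmax_left by lra. rewrite Rmax_left by lra.
    replace (/ M * (x + M / 2 * (P - x) + (M / 2 - 1) * (x - Q))) with (Q / M + (P - Q)/2) by (field; lra).
    rewrite Hk by (assert (0 <= Q / M) by (apply Rle_mult_inv_pos; lra); lra).
    assert (EQ : Q / M < 1 - (P - Q)/2 <-> Q < M * (1 - (P - Q)/2)).
    { split; intro H.
      - apply Rmult_lt_compat_r with (r := M) in H; auto.
        unfold Rdiv in H at 1. rewrite Rmult_assoc, Rinv_l in H; lra.
      - apply Rmult_lt_reg_r with (r := M); auto. unfold Rdiv at 1.
        rewrite Rmult_assoc, Rinv_l; lra. }
    split.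
    + intro H. assert (H' : Q / M < 1 - (P - Q)/2) by lra.
      apply EQ in H'.
      assert (Hs : (P - Q) / 2 < 1) by nra.
      split; [exact Hs|]. split; [nra|].
      rewrite key by (auto; apply Rdiv_lt_0_compat; lra). fold M.
      apply divlt; lra.
    + intros [Hs [_ H]].
      rewrite key in H by (auto; apply Rdiv_lt_0_compat; lra). fold M in H.
      assert (Q < M * (1 - (P - Q)/2)) by (apply divlt2; lra).
      apply EQ in H0. lra.
Qed.
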